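(* Let $Q$ be a finite quiver with vertex set $Q_0$ and arrow set $Q_1$, let $k$ be an algebraically closed field of arbitrary characteristic, and let $\Theta,\sigma:\mathbb{Z}Q_0\to\mathbb{Z}$ be linear functions with $\sigma_v>0$ for all $v\in Q_0$. Let $M$ be a finite dimensional representation of $Q$ over $k$ which is not $(\Theta,\sigma)$-semistable. Let $0\subset M_1\subset\cdots\subset M_t\subset M_{t+1}=M$ together with real weights $\Gamma_1<\Gamma_2<\cdots<\Gamma_{t+1}$ be the Kempf filtration of $M$, i.e. the weighted filtration of $M$ by subrepresentations at which the Kempf function $$K(M_\bullet,\Gamma)=\frac{\sum_{i=1}^{t+1}\Gamma_i\,[\Theta(M)\sigma(M^i)-\sigma(M)\Theta(M^i)]}{\sqrt{\sum_{i=1}^{t+1}\sigma(M^i)\Gamma_i^2}},\qquad M^i=M_i/M_{i-1},$$ attains its maximum among all weighted filtrations of $M$ by subrepresentations with strictly increasing real weights. Then the filtration $0\subset M_1\subset\cdots\subset M_{t+1}=M$ is the Harder-Narasimhan filtration of $M$ with respect to $(\Theta,\sigma)$.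
   Context: A representation $M$ of $Q$ over $k$ consists of finite dimensional $k$-vector spaces $M_v$ ($v\in Q_0$) and $k$-linear maps $M_\alpha:M_{v_i}\to M_{v_j}$ for each arrow $\alpha:v_i\to v_j$; its dimension vector is $\underline{\dim}M=\sum_v \dim_k M_v\cdot v\in\mathbb{N}Q_0$. Write $\Theta(M)=\sum_v\Theta_v\dim_kM_v$ and $\sigma(M)=\sum_v\sigma_v\dim_kM_v$, and for $M\neq 0$ define the slope $\mu_{(\Theta,\sigma)}(M)=\Theta(M)/\sigma(M)$. $M$ is $(\Theta,\sigma)$-semistable if $\mu_{(\Theta,\sigma)}(M')\le\mu_{(\Theta,\sigma)}(M)$ for all non-zero proper subrepresentations $M'\subset M$. A weighted filtration is a chain of subrepresentations $0\subset M_1\subset\cdots\subset M_{t+1}=M$ with strict inclusions (so each $M^i\neq0$ and $\sigma(M^i)>0$) together with real numbers $\Gamma_1<\cdots<\Gamma_{t+1}$. For an unstable $M$, such a maximizing weighted filtration exists and its filtration is unique (Kempf's theorem, applied to the action of $\prod_v GL(M_v)$ on the representation space with the character $\prod_v\det(g_v)^{\Theta(d)\sigma_v-\sigma(d)\Theta_v}$ and the length $\sqrt{\sum_i\sigma(M^i)\Gamma_i^2}$). The Harder-Narasimhan filtration of $M$ is the unique filtration $0\subset M_1\subset\cdots\subset M_{t+1}=M$ by subrepresentations such that, with $M^i=M_i/M_{i-1}$, one has $\mu_{(\Theta,\sigma)}(M^1)>\mu_{(\Theta,\sigma)}(M^2)>\cdots>\mu_{(\Theta,\sigma)}(M^{t+1})$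 and each $M^i$ is $(\Theta,\sigma)$-semistable. *)

(* Defs.v *)
From HB Require Import structures.
From mathcomp Require Import all_boot all_order all_algebra.
From mathcomp Require Import Rstruct.
Set Implicit Arguments. Unset Strict Implicit. Unset Printing Implicit Defensive.
Import Order.TTheory GRing.Theory Num.Theory.
Local Open Scope ring_scope.

Section QuiverReps.
Variables (V A : finType) (src tgt : A -> V) (k : fieldType).

(* A representation: dim M_v = rdim v, and for each arrow a : v -> w a k-linear
   map M_a : k^(rdim v) -> k^(rdim w), given as a matrix acting on row vectors
   (x |-> x *m rmap a). *)
Record rep := Rep {
  rdim : V -> nat;
  rmap : forall a : A, 'M[k]_(rdim (src a), rdim (tgt a)) }.

(* A family of subspaces U_v of M_v (the row space of the matrix U v). *)
Definition subfam (M : rep) := forall v : V, 'M[k]_(rdim M v).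

Definition is_subrep (M : rep) (U : subfam M) : Prop :=
  forall a : A, (U (src a) *m rmap M a <= U (tgt a))%MS.

Definition sub_le (M : rep) (U W : subfam M) : Prop := forall v, (U v <= W v)%MS.
Definition sub_lt (M : rep) (U W : subfam M) : Prop := sub_le U W /\ ~ sub_le W U.

Definition zero_sub (M : rep) : subfam M := fun v => 0.
Definition full_sub (M : rep) : subfam M := fun v => 1%:M.

(* For U <= W, the linear function c : Z Q_0 -> Z evaluated at the dimension
   vector of the subquotient W/U. *)
Definition sq_lin (M : rep) (c : V -> int) (U W : subfam M) : int :=
  \sum_(v : V) c v * ((\rank (W v))%:Z - (\rank (U v))%:Z).

Definition sq_slope (M : rep) (Th sg : V -> int) (U W : subfam M) : Rdefinitions.R :=
  (sq_lin Th U W)%:~R / (sq_lin sg U W)%:~R.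

(* (Theta,sigma)-semistability of the subquotient representation W/U (U <= W
   subrepresentations of M): subrepresentations of W/U are G/U with U <= G <= W,
   G a subrepresentation of M; non-zero proper means U < G < W. *)
Definition semistable_sq (M : rep) (Th sg : V -> int) (U W : subfam M) : Prop :=
  forall G : subfam M, is_subrep G -> sub_lt U G -> sub_lt G W ->
    sq_slope Th sg U G <= sq_slope Th sg U W.

Definition semistable (M : rep) (Th sg : V -> int) : Prop :=
  semistable_sq Th sg (zero_sub M) (full_sub M).

(* A filtration 0 = F 0 < F 1 < ... < F n = M by subrepresentations with strict
   inclusions (n = t+1 >= 1). *)
Definition filtration (M : rep) (n : nat) (F : nat -> subfam M) : Prop :=
  [/\ (0 < n)%N,
      (forall i, (i <= n)%N -> is_subrep (F i)),
      sub_le (F 0%N) (zero_sub M),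
      sub_le (full_sub M) (F n) &
      (forall i, (i < n)%N -> sub_lt (F i) (F i.+1))].

Definition weighted_filtration (M : rep) (n : nat) (F : nat -> subfam M)
    (Ga : nat -> Rdefinitions.R) : Prop :=
  filtration n F /\ (forall i, (1 <= i < n)%N -> Ga i < Ga i.+1).

Definition kempf (M : rep) (Th sg : V -> int) (n : nat) (F : nat -> subfam M)
    (Ga : nat -> Rdefinitions.R) : Rdefinitions.R :=
  (\sum_(1 <= i < n.+1)
      Ga i * ((sq_lin Th (zero_sub M) (full_sub M))%:~R
                * (sq_lin sg (F i.-1) (F i))%:~R
              - (sq_lin sg (zero_sub M) (full_sub M))%:~R
                * (sq_lin Th (F i.-1) (F i))%:~R))
  / Num.sqrt (\sum_(1 <= i < n.+1) (sq_lin sg (F i.-1) (F i))%:~R * Ga i ^+ 2).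

Definition is_HN_filtration (M : rep) (Th sg : V -> int) (n : nat)
    (F : nat -> subfam M) : Prop :=
  [/\ filtration n F,
      (forall i, (1 <= i < n)%N ->
         sq_slope Th sg (F i.-1) (F i) > sq_slope Th sg (F i) (F i.+1)) &
      (forall i, (1 <= i <= n)%N -> semistable_sq Th sg (F i.-1) (F i))].

End QuiverReps.

(* Main.v *)
Require Import Defs.
From HB Require Import structures.
From mathcomp Require Import all_boot all_order all_algebra.
From mathcomp Require Import Rstruct.
From mathcomp Require Import ring lra zify.
Import Order.TTheory GRing.Theory Num.Theory.
Set Implicit Arguments. Unset Strict Implicit. Unset Printing Implicit Defensive.
Local Open Scope ring_scope.

Section Alg.
Variable R : rcfType.

Lemma small_eps (m : nat) (P : nat -> bool) (x y : nat -> R) :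
  (forall j, (j < m)%N -> P j -> 0 < y j) ->
  exists e : R, 0 < e /\ forall j, (j < m)%N -> P j -> e * x j < y j.
Proof.
move=> Hy0; suff: exists e : R, 0 < e /\ forall j, (j < m)%N -> P j -> e * `|x j| < y j.
  move=> [e [e0 He]]; exists e; split => // j jm Pj.
  apply: le_lt_trans (He j jm Pj); rewrite ler_pM2l //; exact: ler_norm.
elim: m Hy0 => [|m IH] Hy; first by exists 1; split => // j.
have [e [e0 He]] : exists e : R, 0 < e /\
    forall j, (j < m)%N -> P j -> e * `|x j| < y j.
  by apply: IH => j jm; apply: Hy; rewrite ltnS ltnW.
case Pm: (P m).
- have ym := Hy m (ltnSn m) Pm.
  have h1 : 0 < `|x m| + 1 by have := normr_ge0 (x m); lra.
  exists (Order.min e (y m / (`|x m| + 1))); split.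
    by rewrite lt_min e0 /= divr_gt0.
  move=> j; rewrite ltnS leq_eqVlt => /orP [/eqP -> _ | jm Pj].
    apply: (@le_lt_trans _ _ (y m / (`|x m| + 1) * `|x m|)).
      by rewrite ler_wpM2r // ge_min lexx orbT.
    by rewrite mulrAC ltr_pdivrMr // mulrDr mulr1 ltrDl.
  apply: le_lt_trans (He j jm Pj).
  by rewrite ler_wpM2r // ge_min lexx.
- exists e; split => // j; rewrite ltnS leq_eqVlt => /orP [/eqP -> | jm Pj].
    by rewrite Pm.
  exact: He.
Qed.

Lemma ratio_lt (N D N' D' : R) : 0 < N -> 0 < D -> 0 < N' -> 0 < D' ->
  N ^+ 2 * D' < N' ^+ 2 * D -> N / Num.sqrt D < N' / Num.sqrt D'.
Proof.
move=> N0 D0 N'0 D'0 H.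
have sD : 0 < Num.sqrt D by rewrite sqrtr_gt0.
have sD' : 0 < Num.sqrt D' by rewrite sqrtr_gt0.
rewrite ltr_pdivrMr // mulrAC ltr_pdivlMr //.
rewrite -(@ltr_pXn2r _ 2) //; last 2 first.
- by rewrite nnegrE mulr_ge0 ?ltW.
- by rewrite nnegrE mulr_ge0 ?ltW.
by rewrite !exprMn !sqr_sqrtr ?ltW.
Qed.

Lemma pos_ratio (N D : R) : 0 <= D -> 0 < N / Num.sqrt D -> 0 < N /\ 0 < D.
Proof.
move=> D0 H.
have DP : 0 < D.
  rewrite lt_def D0 andbT; apply/negP => /eqP Dz.
  by move: H; rewrite Dz sqrtr0 invr0 mulr0 ltxx.
split => //.
have sD : 0 < Num.sqrt D by rewrite sqrtr_gt0.
by move: H; rewrite ltr_pdivlMr // mul0r.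
Qed.

Lemma frac_lt (p q r s : R) : 0 < q -> 0 < s -> (p / q < r / s) = (p * s < r * q).
Proof. by move=> q0 s0; rewrite ltr_pdivrMr // mulrAC ltr_pdivlMr. Qed.

Lemma refine_gain (N D P Q e : R) : 0 < N -> 0 < D -> 0 < P -> 0 < Q -> 0 < e ->
  e * (N * Q) < P * D -> N / Num.sqrt D < (N + e * P) / Num.sqrt (D + e ^+ 2 * Q).
Proof.
move=> N0 D0 P0 Q0 e0 H.
apply: ratio_lt => //.
- by apply: addr_gt0 => //; apply: mulr_gt0.
- by apply: addr_gt0 => //; apply: mulr_gt0 => //; apply: exprn_gt0.
have H2 : e * N * (e * (N * Q)) < e * N * (P * D) by rewrite ltr_pM2l // mulr_gt0.
have H3 : 0 < e * P * (e * P * D) by rewrite !mulr_gt0.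
have H4 : 0 < e * N * (P * D) by rewrite !mulr_gt0.
nra.
Qed.

End Alg.

Section Alg2.
Variable R : rcfType.

Lemma sum_refine (n i : nat) (h h2 : nat -> R) : (1 <= i <= n)%N ->
  (forall j, (j < i)%N -> h2 j = h j) ->
  (forall j, (i.+1 < j)%N -> h2 j = h j.-1) ->
  \sum_(1 <= j < n.+2) h2 j = \sum_(1 <= j < n.+1) h j - h i + h2 i + h2 i.+1.
Proof.
move=> /andP [i1 iN] Hlt Hgt.
rewrite (@big_cat_nat _ _ _ i) //=; last by lia.
rewrite [\sum_(1 <= j < n.+1) h j](@big_cat_nat _ _ _ i) //=; last by lia.
rewrite [\sum_(i <= j < n.+2) h2 j]big_ltn; last by lia.
rewrite [\sum_(i.+1 <= j < n.+2) h2 j]big_ltn; last by lia.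
rewrite [\sum_(i <= j < n.+1) h j]big_ltn; last by lia.
have E1 : \sum_(1 <= j < i) h2 j = \sum_(1 <= j < i) h j.
  by apply: eq_big_nat => j /andP [_ ji]; apply: Hlt.
have E2 : \sum_(i.+2 <= j < n.+2) h2 j = \sum_(i.+1 <= j < n.+1) h j.
  rewrite big_add1 /=; apply: eq_big_nat => j /andP [ij _].
  by rewrite Hgt.
rewrite E1 E2; ring.
Qed.

Lemma perturb_prop (n : nat) (d a G : nat -> R) :
  (forall i, (1 <= i < n.+1)%N -> 0 < d i) ->
  0 < (\sum_(1 <= i < n.+1) G i * a i) / Num.sqrt (\sum_(1 <= i < n.+1) d i * G i ^+ 2) ->
  (exists e, 0 < e /\
     (\sum_(1 <= i < n.+1) (G i + e * (a i / d i)) * a i) /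
       Num.sqrt (\sum_(1 <= i < n.+1) d i * (G i + e * (a i / d i)) ^+ 2)
     <= (\sum_(1 <= i < n.+1) G i * a i) / Num.sqrt (\sum_(1 <= i < n.+1) d i * G i ^+ 2)) ->
  exists c, 0 < c /\ forall i, (1 <= i < n.+1)%N -> G i = c * (a i / d i).
Proof.
move=> dpos Kpos [e [e0 Hle]].
set N := \sum_(1 <= i < n.+1) G i * a i in Kpos Hle.
set D := \sum_(1 <= i < n.+1) d i * G i ^+ 2 in Kpos Hle.
set B := \sum_(1 <= i < n.+1) (a i / d i) * a i.
have D0 : 0 <= D.
  rewrite /D big_nat_cond; apply: sumr_ge0 => i /andP [Hi _].
  by rewrite mulr_ge0 ?sqr_ge0 ?ltW ?dpos.
have [N0 Dp] := pos_ratio D0 Kpos.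
have B0 : 0 <= B.
  rewrite /B big_nat_cond; apply: sumr_ge0 => i /andP [Hi _].
  have := dpos i Hi => di.
  by rewrite mulrAC -expr2 divr_ge0 ?sqr_ge0 ?ltW.
have Sq : forall t, \sum_(1 <= i < n.+1) d i * (G i - t * (a i / d i)) ^+ 2
    = D - 2 * t * N + t ^+ 2 * B.
  move=> t.
  rewrite (eq_big_nat _ _ (F2 := fun i => d i * G i ^+ 2 - (2 * t) * (G i * a i)
      + t ^+ 2 * (a i / d i * a i))); last first.
    move=> i Hi; have := dpos i Hi => di.
    by field; rewrite gt_eqF.
  by rewrite big_split /= sumrB -!mulr_sumr.
have Sq0 : forall t, 0 <= D - 2 * t * N + t ^+ 2 * B.
  move=> t; rewrite -Sq big_nat_cond; apply: sumr_ge0 => i /andP [Hi _].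
  by rewrite mulr_ge0 ?sqr_ge0 ?ltW ?dpos.
have Bp : 0 < B.
  rewrite lt_def B0 andbT; apply/negP => /eqP Bz.
  have := Sq0 (D / N); rewrite Bz mulr0 addr0.
  have -> : 2 * (D / N) * N = 2 * D by field; rewrite gt_eqF.
  lra.
set c := N / B.
have c0 : 0 < c by rewrite divr_gt0.
exists c; split => //.
have Sc0 : \sum_(1 <= i < n.+1) d i * (G i - c * (a i / d i)) ^+ 2 = 0.
  rewrite Sq; apply/eqP; rewrite eq_le (Sq0 c) andbT leNgt; apply/negP => Spos.
  have Key : 0 < B * D - N ^+ 2.
    have -> : B * D - N ^+ 2 = B * (D - 2 * c * N + c ^+ 2 * B).
      by rewrite /c; field; rewrite gt_eqF.
    by rewrite mulr_gt0.
  have EN : \sum_(1 <= i < n.+1) (G i + e * (a i / d i)) * a i = N + e * B.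
    rewrite (eq_big_nat _ _ (F2 := fun i => G i * a i + e * (a i / d i * a i))).
      by rewrite big_split /= -mulr_sumr.
    by move=> i _; ring.
  have ED : \sum_(1 <= i < n.+1) d i * (G i + e * (a i / d i)) ^+ 2
      = D + 2 * e * N + e ^+ 2 * B.
    rewrite (eq_big_nat _ _ (F2 := fun i => d i * G i ^+ 2 + (2 * e) * (G i * a i)
      + e ^+ 2 * (a i / d i * a i))); last first.
      move=> i Hi; have := dpos i Hi => di.
      by field; rewrite gt_eqF.
    by rewrite !big_split /= -!mulr_sumr.
  move: Hle; rewrite EN ED leNgt => /negP; apply.
  apply: ratio_lt => //.
  - by rewrite addr_gt0 // mulr_gt0.
  - have : 0 < 2 * e * N by rewrite !mulr_gt0.
    have : 0 <= e ^+ 2 * B by rewrite mulr_ge0 ?sqr_ge0 ?ltW.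
    lra.
  - have H1 : 0 < 2 * e * N * (B * D - N ^+ 2) by rewrite !mulr_gt0.
    have H2 : 0 <= e ^+ 2 * B * (B * D - N ^+ 2)
      by rewrite !mulr_ge0 ?sqr_ge0 ?ltW.
    have -> : (N + e * B) ^+ 2 * D = N ^+ 2 * (D + 2 * e * N + e ^+ 2 * B)
      + (2 * e * N * (B * D - N ^+ 2) + e ^+ 2 * B * (B * D - N ^+ 2)) by ring.
    lra.
move=> i Hi.
move/eqP: Sc0; rewrite big_nat_cond psumr_eq0; last first.
  by move=> j /andP [Hj _]; rewrite mulr_ge0 ?sqr_ge0 ?ltW ?dpos.
move/allP => /(_ i); rewrite mem_index_iota Hi => /(_ isT) /=.
by rewrite mulf_eq0 gt_eqF ?dpos //= sqrf_eq0 subr_eq0 => /eqP.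
Qed.

End Alg2.

Section Reps.
Variables (V A : finType) (src tgt : A -> V) (k : fieldType) (M : rep src tgt k).

Lemma sq_lin_add (c : V -> int) (U G W : subfam M) :
  sq_lin c U G + sq_lin c G W = sq_lin c U W.
Proof. by rewrite /sq_lin -big_split /=; apply: eq_bigr => v _; ring. Qed.

Lemma sq_lin_pos (sg : V -> int) (U W : subfam M) :
  (forall v, 0 < sg v) -> sub_lt U W -> 0 < sq_lin sg U W.
Proof.
move=> sgp [HUW HWU].
case: (boolP [exists v, ~~ (W v <= U v)%MS]) => [/existsP [v Hv] | /existsPn Hn];
  last by exfalso; apply: HWU => v; move: (Hn v); rewrite negbK.
have [Hle Heq] := mxrank_leqif_sup (HUW v).
have Hr : (\rank (U v) < \rank (W v))%N by rewrite ltn_neqAle Hle Heq Hv.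
rewrite /sq_lin (bigD1 v) //=.
have H1 : 0 < sg v * ((\rank (W v))%:Z - (\rank (U v))%:Z).
  by rewrite mulr_gt0 // subr_gt0 ltz_nat.
have H2 : 0 <= \sum_(i | i != v) sg i * ((\rank (W i))%:Z - (\rank (U i))%:Z).
  apply: sumr_ge0 => j _; apply: mulr_ge0; first exact: ltW. rewrite subr_ge0 lez_nat; exact: mxrankS.

by apply: ltr_wpDr.
Qed.

End Reps.

Theorem theorem5p3 (V A : finType) (src tgt : A -> V) (k : closedFieldType)
  (Th sg : V -> int) (sg_pos : forall v, 0 < sg v)
  (M : rep src tgt k)
  (unstable : ~ semistable M Th sg)
  (n : nat) (F : nat -> subfam M) (Ga : nat -> Rdefinitions.R)
  (wF : weighted_filtration n F Ga)
  (kempf_max : forall (n' : nat) (F' : nat -> subfam M) (Ga' : nat -> Rdefinitions.R),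
      weighted_filtration n' F' Ga' -> kempf Th sg n' F' Ga' <= kempf Th sg n F Ga) :
  is_HN_filtration Th sg n F.
Proof.
have wF0 := wF.
have [[n0 Fsub F0 Fn Flt] Gainc] := wF0.
have zf : sub_lt (zero_sub M) (full_sub M).
  split; first by move=> v; rewrite /zero_sub sub0mx.
  move=> Hfz; have [_ H10] := Flt 0%N n0; apply: H10 => v.
  apply: submx_trans (submx1 _) _; apply: submx_trans (Hfz v) _; exact: sub0mx.
have sgMp : 0 < ((sq_lin sg (zero_sub M) (full_sub M))%:~R : Rdefinitions.R).
  by rewrite ltr0z sq_lin_pos.
have Kpos : 0 < kempf Th sg n F Ga.
  rewrite ltNge; apply/negP => Kle; apply: unstable => G HG H1 H2.
  rewrite leNgt; apply/negP => Hgt.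
  pose F' := fun j : nat => if j == 0%N then zero_sub M else if j == 1%N then G else full_sub M.
  pose Ga' := fun j : nat => if j == 1%N then (-1 : Rdefinitions.R) else 0.
  have wF' : weighted_filtration 2 F' Ga'.
    split; last by move=> [|[|i]] //= _; rewrite /Ga' /= ltrN10.
    split => //.
    - move=> [|[|[|i]]] //= _ a; rewrite /F' /=;
        rewrite ?mul0mx ?sub0mx ?submx1 //; exact: HG.
    - by move=> [|[|i]] //= _; rewrite /F' /=.
  have HK := kempf_max _ _ _ wF'.
  have dG : 0 < ((sq_lin sg (zero_sub M) G)%:~R : Rdefinitions.R).
    by rewrite ltr0z sq_lin_pos.
  have : 0 < kempf Th sg 2 F' Ga'.
    rewrite /kempf !(big_ltn (isT : (1 < 3)%N)) !big_nat1 /F' /Ga' /=.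
    rewrite mul0r addr0 sqrrN expr1n mulr1 expr0n /= mulr0 addr0 mulN1r.
    apply: divr_gt0; last by rewrite sqrtr_gt0.
    move: Hgt; rewrite /sq_slope frac_lt; last 2 first.
    - exact: sgMp.
    - exact: dG.
    move=> Hgt; lra.
  move=> H; have := lt_le_trans H HK; rewrite ltNge Kle; done.
pose d := fun i => ((sq_lin sg (F i.-1) (F i))%:~R : Rdefinitions.R).
pose th := fun i => ((sq_lin Th (F i.-1) (F i))%:~R : Rdefinitions.R).
pose ThM := ((sq_lin Th (zero_sub M) (full_sub M))%:~R : Rdefinitions.R).
pose sgM := ((sq_lin sg (zero_sub M) (full_sub M))%:~R : Rdefinitions.R).
pose a := fun i => ThM * d i - sgM * th i.
have dpos : forall i, (1 <= i < n.+1)%N -> 0 < d i.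
  move=> i /andP [i1 iN]; rewrite /d ltr0z; apply: sq_lin_pos => //.
  have Hl : (i.-1 < n)%N by lia.
  by have := Flt _ Hl; rewrite prednK.
have [c [c0 Hc]] : exists c, 0 < c /\ forall i, (1 <= i < n.+1)%N -> Ga i = c * (a i / d i).
  apply: (@perturb_prop _ n d a Ga dpos Kpos).
  have [e [e0 He]] := @small_eps _ n (fun j => (1 <= j)%N)
    (fun j => a j / d j - a j.+1 / d j.+1) (fun j => Ga j.+1 - Ga j)
    (fun j jn j1 => ltac:(rewrite subr_gt0; apply: Gainc; rewrite j1 jn //)).
  exists e; split => //.
  have wF' : weighted_filtration n F (fun i => Ga i + e * (a i / d i)).
    split => // j /andP [j1 jn].
    have := He j jn j1; rewrite mulrBr => H; lra.
  exact: (kempf_max _ _ _ wF').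
have Eb : forall i, (1 <= i < n.+1)%N -> a i / d i = ThM - sgM * (th i / d i).
  move=> i Hi; have := dpos i Hi => di; rewrite /a; field; by rewrite (gt_eqF di).
split => //.
- move=> i Hin; have Hg := Gainc i Hin; case/andP: Hin => i1 iN.
  have Hi1 : (1 <= i < n.+1)%N by apply/andP; split; [exact: i1 | exact: ltnW].
  have Hi2 : (1 <= i.+1 < n.+1)%N by apply/andP; split; [exact: ltnW | exact: iN].
  rewrite (Hc i Hi1) (Hc i.+1 Hi2) (ltr_pM2l c0) (Eb i Hi1) (Eb i.+1 Hi2) in Hg.
  change (th i.+1 / d i.+1 < th i / d i).
  have : sgM * (th i.+1 / d i.+1) < sgM * (th i / d i) by lra.
  by rewrite (ltr_pM2l sgMp).
move=> i /andP [i1 iN] G HG H1 H2.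
rewrite leNgt; apply/negP => Hgt.
pose d1 := ((sq_lin sg (F i.-1) G)%:~R : Rdefinitions.R).
pose d2 := ((sq_lin sg G (F i))%:~R : Rdefinitions.R).
pose t1 := ((sq_lin Th (F i.-1) G)%:~R : Rdefinitions.R).
pose t2 := ((sq_lin Th G (F i))%:~R : Rdefinitions.R).
have d1p : 0 < d1 by rewrite /d1 ltr0z sq_lin_pos.
have d2p : 0 < d2 by rewrite /d2 ltr0z sq_lin_pos.
have Ed : d i = d1 + d2 by rewrite /d /d1 /d2 -intrD sq_lin_add.
have Et : th i = t1 + t2 by rewrite /th /t1 /t2 -intrD sq_lin_add.
have Hi : (1 <= i < n.+1)%N by apply/andP; split.
have Hsl : d1 * t2 < d2 * t1.
  have Hgt2 : th i / d i < t1 / d1 := Hgt.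
  move: Hgt2; rewrite Ed Et frac_lt; last 2 first.
  - by rewrite -Ed dpos.
  - exact: d1p.
  rewrite mulrDl mulrDr => H; lra.
pose P := sgM * (d2 * t1 - d1 * t2).
pose Q := d1 * d2 ^+ 2 + d2 * d1 ^+ 2.
have Pp : 0 < P by rewrite /P (mulr_gt0 sgMp) // subr_gt0.
have Qp : 0 < Q.
  by rewrite /Q addr_gt0 // mulr_gt0 // exprn_gt0.
pose N := \sum_(1 <= j < n.+1) Ga j * a j.
pose D := \sum_(1 <= j < n.+1) d j * Ga j ^+ 2.
have D0 : 0 <= D.
  rewrite /D big_nat_cond; apply: sumr_ge0 => j /andP [Hj _].
  by rewrite mulr_ge0 ?sqr_ge0 ?ltW ?dpos.
have [N0 Dp] := pos_ratio D0 Kpos.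
pose Pc := (fun j => if j == 0%N then (1 < i)%N else if j == 1%N then (i < n)%N else true).
pose xc := (fun j => if j == 0%N then d2 else if j == 1%N then d1 else N * Q).
pose yc := (fun j => if j == 0%N then Ga i - Ga i.-1 else if j == 1%N then Ga i.+1 - Ga i else P * D).
have Hy : forall j, (j < 3)%N -> Pc j -> 0 < yc j.
  case => [|[|[|j]]] //= _ Pj.
  - move: Pj; rewrite /Pc /yc /= subr_gt0 => Pj.
    have Hg : (0 < i.-1 < n)%N by apply/andP; split; clear -i1 iN Pj; lia.
    by have := Gainc _ Hg; rewrite prednK.
  - move: Pj; rewrite /Pc /yc /= subr_gt0 => Pj.
    by apply: Gainc; apply/andP; split.
  - rewrite /yc /=; exact: mulr_gt0.
have [e [e0 He]] := small_eps xc Hy.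
have He0 : (1 < i)%N -> e * d2 < Ga i - Ga i.-1 by move=> h; exact: (He 0%N isT h).
have He1 : (i < n)%N -> e * d1 < Ga i.+1 - Ga i by move=> h; exact: (He 1%N isT h).
have He2 : e * (N * Q) < P * D by exact: (He 2%N isT isT).
pose F2 := fun j => if (j < i)%N then F j else if j == i then G else F j.-1.
pose Ga2 := fun j => if (j < i)%N then Ga j else if j == i then Ga i - e * d2
  else if j == i.+1 then Ga i + e * d1 else Ga j.-1.
have wF2 : weighted_filtration n.+1 F2 Ga2.
  split; first split.
  - by [].
  - move=> j jn; rewrite /F2; case: ltnP => ji.
      by apply: Fsub; clear -ji iN; lia.
    case: eqP => [_ | jne]; first exact: HG.
    by apply: Fsub; clear -jn; lia.
  - by rewrite /F2 i1 /=.
  - rewrite /F2.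
    try (have -> : (n.+1 < i)%N = false by clear -iN; lia).
    try (have -> : (n.+1 == i) = false by clear -iN; lia).
    by [].
  - move=> j jn; rewrite /F2; case: (ltngtP j.+1 i) => [lt|gt|eq].
    + try (have -> : (j < i)%N = true by clear -lt; lia).
      by apply: Flt; clear -lt iN; lia.
    + try (have -> : (j < i)%N = false by clear -gt; lia).
      case: (eqVneq j i) => [-> | ne].
      * rewrite ?eqxx /=; try (have -> : (i.+1 == i) = false by clear; lia).
        exact: H2.
      * rewrite ?(negbTE ne).
        try (have -> : (j.+1 == i) = false by clear -gt; lia).
        have Hl : (j.-1 < n)%N by clear -jn n0; lia.
        have Hj : (0 < j)%N by clear -gt ne; lia.
        have := Flt _ Hl; rewrite (prednK Hj); exact.
    + by move: H1; rewrite -eq.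
  - move=> j /andP [j1 jn]; rewrite /Ga2; case: (ltngtP j.+1 i) => [lt|gt|eq].
    + try (have -> : (j < i)%N = true by clear -lt; lia).
      by apply: Gainc; apply/andP; split; clear -j1 lt iN; lia.
    + try (have -> : (j < i)%N = false by clear -gt; lia).
      case: (eqVneq j i) => [-> | ne].
      * rewrite ?eqxx /=; try (have -> : (i.+1 == i) = false by clear; lia).
        rewrite ?eqxx.
        have : 0 < e * d1 by exact: mulr_gt0.
        have : 0 < e * d2 by exact: mulr_gt0.
        lra.
      * rewrite ?(negbTE ne).
        try (have -> : (j.+1 == i) = false by clear -gt; lia).
        try (have -> : (j.+1 == i.+1) = false by clear -ne; lia).
        case: (eqVneq j i.+1) => [Hji | ne2].
        -- have Hin : (i < n)%N by clear -jn Hji; lia.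
           rewrite Hji /= ?eqxx; have := He1 Hin; lra.
        -- have Hg : (0 < j.-1 < n)%N by apply/andP; split; clear -gt ne ne2 jn i1; lia.
           have := Gainc _ Hg; rewrite prednK; last by clear -gt ne; lia.
           by [].
    + have Hi1 : (1 < i)%N by clear -eq j1; lia.
      have := He0 Hi1; rewrite -eq /=; lra.
have HK := kempf_max _ _ _ wF2.
have ilt : (i.-1 < i)%N by clear -i1; lia.
have i1f : (i.+1 < i)%N = false by clear; lia.
have i1e : (i.+1 == i) = false by clear; lia.
have Kn : kempf Th sg n.+1 F2 Ga2 = (N + e * P) / Num.sqrt (D + e ^+ 2 * Q).
  rewrite /kempf; congr (_ / Num.sqrt _).
  - rewrite (@sum_refine _ n i (fun j => Ga j * a j)).
    + rewrite -/N /F2 /Ga2 ltnn eqxx ilt i1f i1e /=.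
      rewrite -/d1 -/d2 -/t1 -/t2 -/ThM -/sgM /a Ed Et /P.
      rewrite eqxx; ring.
    + by apply/andP; split.
    + move=> j ji; rewrite /F2 /Ga2 ji (leq_ltn_trans (leq_pred j) ji) /=.
      reflexivity.
    + move=> j ij.
      have h1 : (j < i)%N = false by clear -ij; lia.
      have h2 : (j == i) = false by clear -ij; lia.
      have h3 : (j == i.+1) = false by clear -ij; lia.
      have h4 : (j.-1 < i)%N = false by clear -ij; lia.
      have h5 : (j.-1 == i) = false by clear -ij; lia.
      rewrite /F2 /Ga2 h1 h2 h3 h4 h5 /=.
      reflexivity.
  - rewrite (@sum_refine _ n i (fun j => d j * Ga j ^+ 2)).
    + rewrite -/D /F2 /Ga2 ltnn eqxx ilt i1f i1e /= eqxx.
      rewrite -/d1 -/d2 Ed /Q.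
      ring.
    + by apply/andP; split.
    + move=> j ji; rewrite /F2 /Ga2 ji (leq_ltn_trans (leq_pred j) ji) /=.
      reflexivity.
    + move=> j ij.
      have h1 : (j < i)%N = false by clear -ij; lia.
      have h2 : (j == i) = false by clear -ij; lia.
      have h3 : (j == i.+1) = false by clear -ij; lia.
      have h4 : (j.-1 < i)%N = false by clear -ij; lia.
      have h5 : (j.-1 == i) = false by clear -ij; lia.
      rewrite /F2 /Ga2 h1 h2 h3 h4 h5 /=.
      reflexivity.
have Kg := refine_gain N0 Dp Pp Qp e0 He2.
move: HK; rewrite Kn leNgt => /negP; apply.
exact: Kg.
Qed.
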